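(* For the fully discrete finite element scheme described in the context, with $Q_h^{n-1},Q_h^n$ (and hence, as the scheme preserves these properties, $Q_h^{n+1}$) symmetric and trace-free, define $$E^{n+1}=\frac\sigma2\|D_t^+Q_h^n\|_h^2+\frac{L_1}{2}\|\nabla Q_h^{n+1}\|_{L^2}^2+\frac{L_2+L_3}{2}\|\operatorname{div}Q_h^{n+1}\|_{L^2}^2+\frac12\|r_h^{n+1}\|_h^2.$$ Then $$E^{n+1}-E^n=-\Delta t\|D_t^+Q_h^n\|_h^2-\frac\sigma2\|D_t^+Q_h^n-D_t^+Q_h^{n-1}\|_h^2.$$
   Context: Setting: $\Omega\subset\mathbb{R}^d$ ($d\in\{2,3\}$) bounded domain; constants $L_1>0$, $L_2+L_3\ge0$, $a,b\in\mathbb{R}$, $c>0$, $\sigma>0$, $A_0$ such that $\frac a2\operatorname{tr}(Q^2)-\frac b3\operatorname{tr}(Q^3)+\frac c4\operatorname{tr}^2(Q^2)+A_0>0$ for all symmetric trace-free $Q$. $f(Q)=aQ-b[Q^2-\frac1d\operatorname{tr}(Q^2)I]+c\operatorname{tr}(Q^2)Q$, $r(Q)=\sqrt{2(\frac a2\operatorname{tr}(Q^2)-\frac b3\operatorname{tr}(Q^3)+\frac c4\operatorname{tr}^2(Q^2)+A_0)}$, $P(Q)=f(Q)/r(Q)$; $(\operatorname{div}Q)_j=\sum_k\partial_kQ_{jk}$. Discretization: $\mathfrak T_h$ conforming shape-regular quasi-uniform triangulation, interior nodes $z\in\mathcal N^h$, hat functions $\varphi_z$; $\mathcal S^h$ =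 matrix-valued, $\mathcal T^h$ = scalar continuous piecewise linear functions vanishing on $\partial\Omega$. Mass-lumped inner product $\langle W^1,W^2\rangle_h=\sum_z\gamma_zW^1(z):W^2(z)$, $\gamma_z=\int_\Omega\varphi_z$, norm $\|\cdot\|_h$ (same for scalars). $\langle\alpha(W^1),W^2\rangle_h:=-\int_\Omega\sum_{i,j,k}(\partial_kW^1_{jk}\partial_iW^2_{ij}+\partial_kW^1_{ik}\partial_jW^2_{ij})dx+\frac2d\int_\Omega\sum_{i,j,k,\ell}\partial_\ell W^1_{k\ell}\partial_kW^2_{ij}\delta_{ij}dx$. $D_t^\pm$ forward/backward difference quotients with step $\Delta t$, $g^{n+1/2}=(g^{n+1}+g^n)/2$, $\langle\alpha_h^{n+1/2},\Phi\rangle_h=\frac12(\langle\alpha(Q_h^{n+1}),\Phi\rangle_h+\langle\alpha(Q_h^n),\Phi\rangle_h)$. Scheme: for all $\Phi_h\in\mathcal S^h,\psi_h\in\mathcal T^h$, $\langle D_t^+Q_h^n,\Phi_h\rangle_h=-\sigma\langle D_t^-D_t^+Q_h^n,\Phi_h\rangle_h-L_1\langle\nabla Q_h^{n+1/2},\nabla\Phi_h\rangle_{L^2}+\frac{L_2+L_3}{2}\langle\alpha_h^{n+1/2},\Phi_h\rangle_h-\langle r_h^{n+1/2}P(Q_h^n),\Phi_h\rangle_h$, $\langle r_h^{n+1}-r_h^n,\psi_h\rangle_h=\langle P(Q_h^n):(Q_h^{n+1}-Q_h^n),\psi_h\rangle_h$. *)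

(* Defs.v *)
From mathcomp Require Import all_boot all_order all_algebra.
From mathcomp Require Import reals.
Set Implicit Arguments. Unset Strict Implicit. Unset Printing Implicit Defensive.
Import Order.TTheory GRing.Theory Num.Theory.
Local Open Scope ring_scope.

Section FEM.
Variables (R : realType) (d : nat).
(* Mesh data: a finite set of nodes N with coordinates in R^d (row vectors),
   a finite set of elements E (d-simplices), each given by its d+1 vertices. *)
Variables (N E : finType) (coord : N -> 'rV[R]_d) (vert : E -> 'I_d.+1 -> N).

Definition edge_mx (T : E) : 'M[R]_d :=
  \matrix_(k < d, a < d) (coord (vert T (lift ord0 k)) 0 a - coord (vert T ord0) 0 a).

Definition vol (T : E) : R := `|\det (edge_mx T)| / (d`!)%:R.

Definition triangulation : Prop :=
  [/\ forall T, injective (vert T),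
      forall T, \det (edge_mx T) != 0
    & forall z, exists T j, vert T j = z].

(* Constant gradient on T of the barycentric coordinate lambda_j^T
   (the restriction of the hat function of node vert T j to T):
   for x in T,  x - v_0 = sum_k lambda_{k+1}(x) (v_{k+1}-v_0),
   i.e. (lambda_1..lambda_d)(x) = (x - v_0) * edge_mx^{-1}. *)
Definition glam (T : E) (j : 'I_d.+1) (a : 'I_d) : R :=
  match unlift ord0 j with
  | Some k => invmx (edge_mx T) a k
  | None => - \sum_(k < d) invmx (edge_mx T) a k
  end.

Definition verts (T : E) : {set N} := [set vert T j | j : 'I_d.+1].
Definition face (T : E) (j : 'I_d.+1) : {set N} := [set vert T j' | j' in [set~ j]].
Definition bface (F : {set N}) : bool := #|[set T | [exists j, face T j == F]]| == 1%N.
Definition bnode (z : N) : bool := [exists T, exists j, (z \in face T j) && bface (face T j)].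
Definition inode (z : N) : bool := ~~ bnode z.

(* Finite element functions are given by nodal values.
   S^h: matrix-valued P1 functions vanishing on the boundary;
   T^h: scalar-valued P1 functions vanishing on the boundary. *)
Definition in_Sh (W : N -> 'M[R]_d) : Prop := forall z, bnode z -> W z = 0.
Definition in_Th (w : N -> R) : Prop := forall z, bnode z -> w z = 0.

Definition frob (A B : 'M[R]_d) : R := \sum_(i < d) \sum_(j < d) A i j * B i j.

(* gamma_z = int_Omega phi_z = sum_{T containing z} |T| / (d+1) *)
Definition gam (z : N) : R := \sum_(T | z \in verts T) vol T / (d.+1)%:R.

(* mass-lumped inner products and norms *)
Definition ipS (W1 W2 : N -> 'M[R]_d) : R :=
  \sum_(z | inode z) gam z * frob (W1 z) (W2 z).
Definition ipT (w1 w2 : N -> R) : R := \sum_(z | inode z) gam z * (w1 z * w2 z).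
Definition nrmS2 (W : N -> 'M[R]_d) : R := ipS W W.
Definition nrmT2 (w : N -> R) : R := ipT w w.

(* partial derivative d_a W on element T (a constant matrix) *)
Definition dW (W : N -> 'M[R]_d) (T : E) (a : 'I_d) : 'M[R]_d :=
  \sum_(j < d.+1) glam T j a *: W (vert T j).

(* Integrals over Omega of the (elementwise constant) integrands *)
Definition ipgrad (W1 W2 : N -> 'M[R]_d) : R :=
  \sum_T vol T * \sum_(a < d) frob (dW W1 T a) (dW W2 T a).
Definition divnorm2 (W : N -> 'M[R]_d) : R :=
  \sum_T vol T * \sum_(j < d) (\sum_(k < d) dW W T k j k) ^+ 2.
Definition alpha_ip (W1 W2 : N -> 'M[R]_d) : R :=
  \sum_T vol T *
   ( - (\sum_(i < d) \sum_(j < d) \sum_(k < d)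
          (dW W1 T k j k * dW W2 T i i j + dW W1 T k i k * dW W2 T j i j))
     + 2 / d%:R * (\sum_(i < d) \sum_(j < d) \sum_(k < d) \sum_(l < d)
          dW W1 T l k l * dW W2 T k i j * (i == j)%:R)).

End FEM.

Section Bulk.
Variables (R : realType) (d : nat) (a b c A0 : R).
Definition trQ2 (Q : 'M[R]_d) : R := \tr (Q *m Q).
Definition trQ3 (Q : 'M[R]_d) : R := \tr (Q *m Q *m Q).
Definition bulk (Q : 'M[R]_d) : R :=
  a / 2 * trQ2 Q - b / 3 * trQ3 Q + c / 4 * trQ2 Q ^+ 2 + A0.
Definition fQ (Q : 'M[R]_d) : 'M[R]_d :=
  a *: Q - b *: (Q *m Q - (trQ2 Q / d%:R) *: 1%:M) + (c * trQ2 Q) *: Q.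
Definition rQ (Q : 'M[R]_d) : R := Num.sqrt (2 * bulk Q).
Definition PQ (Q : 'M[R]_d) : 'M[R]_d := (rQ Q)^-1 *: fQ Q.
End Bulk.

(* Main.v *)
Require Import Defs.
From mathcomp Require Import all_boot all_order all_algebra.
From mathcomp Require Import reals.
From mathcomp Require Import ring lra.
Import Order.TTheory GRing.Theory Num.Theory.
Local Open Scope ring_scope.

Set Implicit Arguments. Unset Strict Implicit. Unset Printing Implicit Defensive.
Section Gen.
Variable R : realType.

Lemma mul_self_ge0 (x : R) : 0 <= x * x.
Proof. by rewrite -expr2 sqr_ge0. Qed.

Lemma sum_lin4 (I : finType) (P : pred I) (G F1 F2 F3 F4 : I -> R) c1 c2 c3 c4 :
  (forall i, P i -> G i = c1 * F1 i + c2 * F2 i + c3 * F3 i + c4 * F4 i) ->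
  \sum_(i | P i) G i = c1 * \sum_(i | P i) F1 i + c2 * \sum_(i | P i) F2 i
     + c3 * \sum_(i | P i) F3 i + c4 * \sum_(i | P i) F4 i.
Proof.
move=> H; rewrite !mulr_sumr -!big_split /=; exact: eq_bigr.
Qed.

Lemma sum_lin3 (I : finType) (P : pred I) (G F1 F2 F3 : I -> R) c1 c2 c3 :
  (forall i, P i -> G i = c1 * F1 i + c2 * F2 i + c3 * F3 i) ->
  \sum_(i | P i) G i = c1 * \sum_(i | P i) F1 i + c2 * \sum_(i | P i) F2 i
     + c3 * \sum_(i | P i) F3 i.
Proof.
move=> H; rewrite !mulr_sumr -!big_split /=; exact: eq_bigr.
Qed.

Lemma sum_lin2 (I : finType) (P : pred I) (G F1 F2 : I -> R) c1 c2 :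
  (forall i, P i -> G i = c1 * F1 i + c2 * F2 i) ->
  \sum_(i | P i) G i = c1 * \sum_(i | P i) F1 i + c2 * \sum_(i | P i) F2 i.
Proof.
move=> H; rewrite !mulr_sumr -!big_split /=; exact: eq_bigr.
Qed.

Lemma sum_lin1 (I : finType) (P : pred I) (G F1 : I -> R) c1 :
  (forall i, P i -> G i = c1 * F1 i) ->
  \sum_(i | P i) G i = c1 * \sum_(i | P i) F1 i.
Proof.
move=> H; rewrite !mulr_sumr /=; exact: eq_bigr.
Qed.

Variable d : nat.
Implicit Types A B M : 'M[R]_d.

Lemma frob_lin4 A B A1 B1 A2 B2 A3 B3 A4 B4 c1 c2 c3 c4 :
  (forall i j, A i j * B i j = c1 * (A1 i j * B1 i j) + c2 * (A2 i j * B2 i j)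
     + c3 * (A3 i j * B3 i j) + c4 * (A4 i j * B4 i j)) ->
  frob A B = c1 * frob A1 B1 + c2 * frob A2 B2 + c3 * frob A3 B3 + c4 * frob A4 B4.
Proof.
move=> H; rewrite /frob; apply: sum_lin4 => i _; exact: sum_lin4.
Qed.

Lemma frob_lin2 A B A1 B1 A2 B2 c1 c2 :
  (forall i j, A i j * B i j = c1 * (A1 i j * B1 i j) + c2 * (A2 i j * B2 i j)) ->
  frob A B = c1 * frob A1 B1 + c2 * frob A2 B2.
Proof.
move=> H; rewrite /frob; apply: sum_lin2 => i _; exact: sum_lin2.
Qed.

Lemma frob_lin1 A B A1 B1 c1 :
  (forall i j, A i j * B i j = c1 * (A1 i j * B1 i j)) ->
  frob A B = c1 * frob A1 B1.
Proof.
move=> H; rewrite /frob; apply: sum_lin1 => i _; exact: sum_lin1.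
Qed.

Lemma frob_ge0 M : 0 <= frob M M.
Proof. by apply: sumr_ge0 => i _; apply: sumr_ge0 => j _; rewrite mul_self_ge0. Qed.

Lemma frob_eq0 M : frob M M = 0 -> M = 0.
Proof.
move=> H; apply/matrixP => i j; rewrite mxE.
have Hi : \sum_(j < d) M i j * M i j = 0.
  by apply: (psumr_eq0P _ H) => // k _; apply: sumr_ge0 => l _; apply: mul_self_ge0.
have : M i j * M i j = 0.
  by apply: (psumr_eq0P _ Hi) => // k _; apply: mul_self_ge0.
by move/eqP; rewrite mulf_eq0 orbb => /eqP.
Qed.

Lemma frobT A B : frob A B^T = frob A^T B.
Proof.
rewrite /frob exchange_big /=; apply: eq_bigr => i _; apply: eq_bigr => j _.
by rewrite !mxE.
Qed.

Lemma frob1 A : frob A 1%:M = \tr A.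
Proof.
rewrite /frob /mxtrace; apply: eq_bigr => i _.
rewrite (bigD1 i) //= big1 ?addr0; first by rewrite mxE eqxx mulr1.
by move=> j /negbTE ji; rewrite mxE eq_sym ji mulr0.
Qed.

Definition symtf M := M^T = M /\ \tr M = 0.
Definition kpart M := M + M^T = (2 * \tr M / d%:R) *: 1%:M.

Lemma orth M Y : symtf M -> kpart Y -> frob M Y = 0.
Proof.
move=> [MT Mt] KY.
have e : frob M (Y + Y^T) = 2 * frob M Y.
  rewrite (@frob_lin2 M (Y + Y^T) M Y M Y^T 1 1); last by move=> i j; rewrite !mxE; ring.
  by rewrite frobT MT; ring.
have : frob M (Y + Y^T) = 0.
  rewrite KY (@frob_lin1 _ _ M 1%:M (2 * \tr Y / d%:R)); last by move=> i j; rewrite !mxE; ring.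
  by rewrite frob1 Mt mulr0.
rewrite e => /eqP; rewrite mulf_eq0 pnatr_eq0 /= => /eqP //.
Qed.

End Gen.

Section FEM2.
Variables (R : realType) (d : nat).
Variables (N E : finType) (coord : N -> 'rV[R]_d) (vert : E -> 'I_d.+1 -> N).
Notation dW := (dW coord vert).

Lemma dW_lin2 (W W1 W2 : N -> 'M[R]_d) c1 c2 T a :
  (forall z, W z = c1 *: W1 z + c2 *: W2 z) ->
  dW W T a = c1 *: dW W1 T a + c2 *: dW W2 T a.
Proof.
move=> H; rewrite /Defs.dW !scaler_sumr -big_split /=; apply: eq_bigr => j _.
by rewrite H scalerDr !scalerA (mulrC c1) (mulrC c2).
Qed.

Lemma dW_pres (Pr : 'M[R]_d -> Prop) (W : N -> 'M[R]_d) T a :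
  Pr 0 -> (forall x y, Pr x -> Pr y -> Pr (x + y)) -> (forall c x, Pr x -> Pr (c *: x)) ->
  (forall z, Pr (W z)) -> Pr (dW W T a).
Proof.
move=> H0 HD HZ HW; rewrite /Defs.dW.
by apply: (big_ind Pr) => // j _; apply: HZ.
Qed.

Lemma symtf_dW (W : N -> 'M[R]_d) T a : (forall z, symtf (W z)) -> symtf (dW W T a).
Proof.
move=> HW; apply: dW_pres => //.
- by rewrite /symtf trmx0 mxtrace0.
- by move=> x y [xT xt] [yT yt]; rewrite /symtf linearD /= xT yT mxtraceD xt yt addr0.
- by move=> c x [xT xt]; rewrite /symtf linearZ /= xT mxtraceZ xt mulr0.
Qed.

Lemma kpart_dW (W : N -> 'M[R]_d) T a : (forall z, kpart (W z)) -> kpart (dW W T a).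
Proof.
move=> HW; apply: dW_pres => //.
- by rewrite /kpart trmx0 mxtrace0 addr0 mulr0 mul0r scale0r.
- move=> x y; rewrite /kpart => Hx Hy; rewrite linearD /= mxtraceD.
  rewrite addrACA Hx Hy -scalerDl; congr (_ *: _); ring.
- move=> c x; rewrite /kpart => Hx; rewrite linearZ /= -scalerDr Hx scalerA mxtraceZ.
  congr (_ *: _); ring.
Qed.

Definition vdiv (W : N -> 'M[R]_d) T (j : 'I_d) := \sum_(k < d) dW W T k j k.

Lemma alpha_split (W1 W2 : N -> 'M[R]_d) :
  alpha_ip coord vert W1 W2 = \sum_T vol coord vert T *
    (- (\sum_(j < d) vdiv W1 T j * (\sum_(i < d) dW W2 T i i j + vdiv W2 T j))
     + 2 / d%:R * \sum_(k < d) vdiv W1 T k * \tr (dW W2 T k)).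
Proof.
rewrite /alpha_ip; apply: eq_bigr => T _; congr (_ * (- _ + _ * _)).
- under eq_bigr do under eq_bigr do rewrite big_split /=.
  under eq_bigr do rewrite big_split /=.
  rewrite big_split /=.
  under [X in _ = X]eq_bigr do rewrite mulrDr.
  rewrite big_split /=; congr (_ + _).
  + rewrite exchange_big /=; apply: eq_bigr => j _; rewrite mulr_sumr.
    apply: eq_bigr => i _; rewrite /vdiv mulr_suml; apply: eq_bigr => k _; ring.
  + apply: eq_bigr => i _; rewrite /vdiv mulr_sumr.
    apply: eq_bigr => j _; rewrite mulr_suml; apply: eq_bigr => k _; ring.
- have Hc : forall i : 'I_d, \sum_(j < d) \sum_(k < d) \sum_(l < d)
      dW W1 T l k l * dW W2 T k i j * (i == j)%:R =
      \sum_(k < d) \sum_(l < d) dW W1 T l k l * dW W2 T k i i.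
    move=> i; rewrite (bigD1 i) //= [X in _ + X]big1 ?addr0.
      by apply: eq_bigr => k _; apply: eq_bigr => l _; rewrite eqxx mulr1.
    move=> j /negbTE ji; rewrite eq_sym ji; apply: big1 => k _; apply: big1 => l _.
    by rewrite mulr0.
  under eq_bigr => i _ do rewrite Hc.
  rewrite exchange_big /=; apply: eq_bigr => k _.
  rewrite [LHS]exchange_big /= /vdiv /mxtrace mulr_suml; apply: eq_bigr => l _; rewrite mulr_sumr.
  apply: eq_bigr => i _; ring.
Qed.


Lemma alpha_sym (W1 W2 : N -> 'M[R]_d) : (forall z, symtf (W2 z)) ->
  alpha_ip coord vert W1 W2 =
  \sum_T vol coord vert T * (-2 * \sum_(j < d) vdiv W1 T j * vdiv W2 T j).
Proof.
move=> HW; rewrite alpha_split; apply: eq_bigr => T _; congr (_ * _).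
have Hs := fun k => symtf_dW T k HW.
rewrite [X in 2 / _ * X]big1 ?mulr0 ?addr0; last by move=> k _; rewrite (proj2 (Hs k)) mulr0.
rewrite mulr_sumr -sumrN; apply: eq_bigr => j _.
have -> : \sum_(i < d) dW W2 T i i j = vdiv W2 T j.
  apply: eq_bigr => i _.
  by rewrite -[in RHS](proj1 (Hs i)) mxE.
ring.
Qed.

Lemma alpha_k (W1 W2 : N -> 'M[R]_d) : (d%:R != 0 :> R) -> (forall z, kpart (W2 z)) ->
  alpha_ip coord vert W1 W2 = 0.
Proof.
move=> d0 HW; rewrite alpha_split; apply: big1 => T _.
have Hk : forall k, dW W2 T k + (dW W2 T k)^T = (2 * \tr (dW W2 T k) / d%:R) *: 1%:M := fun k => kpart_dW T k HW.
have Hj : forall j, \sum_(i < d) dW W2 T i i j + vdiv W2 T j = 2 * \tr (dW W2 T j) / d%:R.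
  move=> j; rewrite /vdiv -big_split /=.
  rewrite (bigD1 j) //= [X in _ + X]big1 ?addr0.
    have := congr1 (fun M : 'M[R]_d => M j j) (Hk j); rewrite !mxE eqxx mulr1 => ->; by [].
  move=> i ij; have := congr1 (fun M : 'M[R]_d => M j i) (Hk i); rewrite !mxE eq_sym (negbTE ij) mulr0.
  by move=> <-; rewrite addrC.
under eq_bigr do rewrite Hj.
rewrite mulr_sumr -sumrN -big_split /= big1 ?mulr0 // => k _; field; exact: d0.
Qed.

End FEM2.

Section Bil.
Variables (R : realType) (d : nat).
Implicit Types A B C M : 'M[R]_d.

Lemma frobDl A B C : frob (A + B) C = frob A C + frob B C.
Proof. rewrite (@frob_lin2 _ _ _ _ A C B C 1 1) ?mul1r // => i j; rewrite !mxE; ring. Qed.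
Lemma frobDr A B C : frob C (A + B) = frob C A + frob C B.
Proof. rewrite (@frob_lin2 _ _ _ _ C A C B 1 1) ?mul1r // => i j; rewrite !mxE; ring. Qed.
Lemma frobBl A B C : frob (A - B) C = frob A C - frob B C.
Proof. rewrite (@frob_lin2 _ _ _ _ A C B C 1 (-1)) ?mul1r ?mulN1r // => i j; rewrite !mxE; ring. Qed.
Lemma frobBr A B C : frob C (A - B) = frob C A - frob C B.
Proof. rewrite (@frob_lin2 _ _ _ _ C A C B 1 (-1)) ?mul1r ?mulN1r // => i j; rewrite !mxE; ring. Qed.
Lemma frobZl (k : R) A C : frob (k *: A) C = k * frob A C.
Proof. rewrite (@frob_lin1 _ _ _ _ A C k) // => i j; rewrite !mxE; ring. Qed.
Lemma frobZr (k : R) A C : frob C (k *: A) = k * frob C A.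
Proof. rewrite (@frob_lin1 _ _ _ _ C A k) // => i j; rewrite !mxE; ring. Qed.
Lemma frobC A C : frob A C = frob C A.
Proof. rewrite (@frob_lin1 _ _ _ _ C A 1) ?mul1r // => i j; ring. Qed.

Definition Sp M : 'M[R]_d := 2^-1 *: (M + M^T) - (\tr M / d%:R) *: 1%:M.

Lemma symtf_Sp M : (d%:R != 0 :> R) -> symtf (Sp M).
Proof.
move=> d0; split.
  by rewrite /Sp linearB /= !linearZ /= tr_scalar_mx linearD /= trmxK (addrC M^T).
rewrite /Sp raddfB /= !mxtraceZ mxtraceD mxtrace_tr mxtrace1; field; exact: d0.
Qed.

Lemma kpart_K M : (d%:R != 0 :> R) -> kpart (M - Sp M).
Proof.
move=> d0; rewrite /kpart.
have -> : \tr (M - Sp M) = \tr M by rewrite raddfB /= (proj2 (symtf_Sp M d0)) subr0.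
apply/matrixP => i j; rewrite /Sp !mxE (eq_sym j i); field; exact: d0.
Qed.

Lemma Sp0 : Sp 0 = 0.
Proof. by rewrite /Sp trmx0 addr0 scaler0 mxtrace0 mul0r scale0r subr0. Qed.

Lemma trN A : (- A)^T = - A^T.
Proof. by apply/matrixP => i j; rewrite !mxE. Qed.

Lemma trD A B : (A + B)^T = A^T + B^T.
Proof. by apply/matrixP => i j; rewrite !mxE. Qed.
Lemma trZ (k : R) A : (k *: A)^T = k *: A^T.
Proof. by apply/matrixP => i j; rewrite !mxE. Qed.

Lemma trcN A : \tr (- A) = - \tr A.
Proof. by rewrite /mxtrace -sumrN; apply: eq_bigr => i _; rewrite mxE. Qed.

Lemma symtf_PQ (a b c A0 : R) M : (d%:R != 0 :> R) -> symtf M -> symtf (PQ a b c A0 M).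
Proof.
move=> d0 [MT Mt]; rewrite /PQ /fQ; split.
  by rewrite !(trD, trZ, trN) tr_scalar_mx trmx_mul !MT.
rewrite !(mxtraceZ, mxtraceD, trcN) /= mxtrace1 Mt.
by rewrite /trQ2 divfK // subrr !mulr0 subrr addr0 mulr0.
Qed.

End Bil.

Section Pos.
Variables (R : realType) (d : nat).
Variables (N E : finType) (coord : N -> 'rV[R]_d) (vert : E -> 'I_d.+1 -> N).

Lemma vol_ge0 T : 0 <= vol coord vert T.
Proof. by rewrite /vol divr_ge0 ?normr_ge0 ?ler0n. Qed.

Lemma gam_ge0 z : 0 <= gam coord vert z.
Proof. by apply: sumr_ge0 => T _; rewrite divr_ge0 ?vol_ge0 ?ler0n. Qed.

Lemma gam_gt0 z : triangulation coord vert -> 0 < gam coord vert z.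
Proof.
case=> _ hdet hcov; have [T [j hj]] := hcov z.
have zT : z \in verts vert T by rewrite /verts -hj; apply/imsetP; exists j.
rewrite /gam (bigD1 T) //=.
apply: ltr_wpDr; first by apply: sumr_ge0 => T' _; rewrite divr_ge0 ?vol_ge0 ?ler0n.
rewrite divr_gt0 ?ltr0n // /vol divr_gt0 ?normr_gt0 ?ltr0n ?fact_gt0 //.
Qed.

Lemma nrmS2_ge0 W : 0 <= nrmS2 coord vert W.
Proof. by apply: sumr_ge0 => z _; rewrite mulr_ge0 ?gam_ge0 ?frob_ge0. Qed.

Lemma nrmT2_ge0 w : 0 <= nrmT2 coord vert w.
Proof. by apply: sumr_ge0 => z _; rewrite mulr_ge0 ?gam_ge0 ?mul_self_ge0. Qed.

Lemma ipgrad_ge0 W : 0 <= ipgrad coord vert W W.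
Proof.
apply: sumr_ge0 => T _; rewrite mulr_ge0 ?vol_ge0 //.
by apply: sumr_ge0 => a _; apply: frob_ge0.
Qed.

End Pos.

Theorem theorem4p2 (R : realType) (d : nat)
  (L1 L2 L3 a b c sigma A0 dt : R)
  (N E : finType) (coord : N -> 'rV[R]_d) (vert : E -> 'I_d.+1 -> N)
  (Qm Q0 Q1 : N -> 'M[R]_d)   (* Q_h^{n-1}, Q_h^n, Q_h^{n+1} *)
  (r0 r1 : N -> R) :          (* r_h^n, r_h^{n+1} *)
  (d = 2 \/ d = 3)%N ->
  0 < L1 -> 0 <= L2 + L3 -> 0 < c -> 0 < sigma -> 0 < dt ->
  (forall Q : 'M[R]_d, Q^T = Q -> \tr Q = 0 -> 0 < bulk a b c A0 Q) ->
  triangulation coord vert ->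
  in_Sh vert Qm -> in_Sh vert Q0 -> in_Sh vert Q1 ->
  in_Th vert r0 -> in_Th vert r1 ->
  (forall z, (Qm z)^T = Qm z /\ \tr (Qm z) = 0) ->
  (forall z, (Q0 z)^T = Q0 z /\ \tr (Q0 z) = 0) ->
  let ipS := ipS coord vert in
  let ipT := ipT coord vert in
  let DQ0 := fun z => dt^-1 *: (Q1 z - Q0 z) in   (* D_t^+ Q_h^n *)
  let DQm := fun z => dt^-1 *: (Q0 z - Qm z) in   (* D_t^+ Q_h^{n-1} *)
  let PQ0 := fun z => PQ a b c A0 (Q0 z) in       (* P(Q_h^n) *)
  (* first equation of the scheme *)
  (forall Phi : N -> 'M[R]_d, in_Sh vert Phi ->
     ipS DQ0 Phi =
       - sigma * ipS (fun z => dt^-1 *: (DQ0 z - DQm z)) Phi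
       - L1 * ipgrad coord vert (fun z => 2^-1 *: (Q1 z + Q0 z)) Phi
       + (L2 + L3) / 2 *
           (2^-1 * (alpha_ip coord vert Q1 Phi + alpha_ip coord vert Q0 Phi))
       - ipS (fun z => ((r1 z + r0 z) / 2) *: PQ0 z) Phi) ->
  (* second equation of the scheme *)
  (forall psi : N -> R, in_Th vert psi ->
     ipT (fun z => r1 z - r0 z) psi =
       ipT (fun z => frob (PQ0 z) (Q1 z - Q0 z)) psi) ->
  let energy := fun (Qprev Qcur : N -> 'M[R]_d) (rcur : N -> R) =>
      sigma / 2 * nrmS2 coord vert (fun z => dt^-1 *: (Qcur z - Qprev z))
    + L1 / 2 * ipgrad coord vert Qcur Qcur
    + (L2 + L3) / 2 * divnorm2 coord vert Qcur
    + 1 / 2 * nrmT2 coord vert rcur in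
  energy Q0 Q1 r1 - energy Qm Q0 r0 =
    - dt * nrmS2 coord vert DQ0
    - sigma / 2 * nrmS2 coord vert (fun z => DQ0 z - DQm z).
Proof.
move=> hd hL1 hL23 hc hs hdt hbulk htri hQm hQ0 hQ1 hr0 hr1 hsQm hsQ0
  ipS0 ipT0 DQ0 DQm PQ0 H1 H2 energy.
rewrite /energy /DQ0 /DQm /PQ0 /ipS0 /ipT0 in H1 H2 *.
clear energy DQ0 DQm PQ0 ipS0 ipT0.
have d0 : (d%:R != 0 :> R) by case: hd => ->; rewrite pnatr_eq0.
have dt0 : dt != 0 by rewrite gt_eqF.
have sQ0 : forall z, symtf (Q0 z) by [].
have sQm : forall z, symtf (Qm z) by [].
have sP : forall z, symtf (PQ a b c A0 (Q0 z)) by move=> z; apply: symtf_PQ.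
(* Step 1: Q1 is symmetric and trace-free *)
pose X := fun z => Q1 z - Sp (Q1 z).
have kX : forall z, kpart (X z) by move=> z; apply: kpart_K.
have XS : in_Sh vert X by move=> z bz; rewrite /X hQ1 // Sp0 subr0.
have XE : forall z, Q1 z = Sp (Q1 z) + X z by move=> z; rewrite /X addrC subrK.
clearbody X.
have fQ1X : forall z, frob (Q1 z) (X z) = frob (X z) (X z).
  move=> z; rewrite {1}XE.
  by rewrite frobDl orth ?add0r //; apply: symtf_Sp.
have HX := H1 X XS.
have T1 : ipS coord vert (fun z => dt^-1 *: (Q1 z - Q0 z)) X = dt^-1 * nrmS2 coord vert X.
  apply: sum_lin1 => z _ /=.
  by rewrite frobZl frobBl fQ1X (orth (sQ0 z) (kX z)) subr0; ring.
have T2 : ipS coord vert (fun z => dt^-1 *: (dt^-1 *: (Q1 z - Q0 z) - dt^-1 *: (Q0 z - Qm z))) X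
   = dt^-1 * dt^-1 * nrmS2 coord vert X.
  apply: sum_lin1 => z _ /=.
  rewrite frobZl frobBl !frobZl !frobBl fQ1X (orth (sQ0 z) (kX z)) (orth (sQm z) (kX z)).
  ring.
have T3 : ipgrad coord vert (fun z => 2^-1 *: (Q1 z + Q0 z)) X = 2^-1 * ipgrad coord vert X X.
  apply: sum_lin1 => T _ /=.
  rewrite (@sum_lin1 _ _ _ _ (fun a => frob (dW coord vert X T a) (dW coord vert X T a)) 2^-1); first ring.
  move=> k _.
  rewrite (@dW_lin2 _ _ _ _ coord vert (fun z => 2^-1 *: (Q1 z + Q0 z)) Q1 Q0 2^-1 2^-1); last by move=> z; rewrite scalerDr.
  rewrite (@dW_lin2 _ _ _ _ coord vert Q1 (fun z => Sp (Q1 z)) X 1 1 T k); last first.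
    by move=> z; rewrite !scale1r -XE.
  rewrite !frobDl !frobZl !frobDl !frobZl.
  rewrite (orth (symtf_dW coord vert T k sQ0) (kpart_dW coord vert T k kX)).
  rewrite (orth (symtf_dW coord vert T k (fun z => symtf_Sp (Q1 z) d0)) (kpart_dW coord vert T k kX)).
  ring.
have T4 : forall W, alpha_ip coord vert W X = 0 by move=> W; apply: alpha_k.
have T5 : ipS coord vert (fun z => ((r1 z + r0 z) / 2) *: PQ a b c A0 (Q0 z)) X = 0.
  by apply: big1 => z _; rewrite frobZl (orth (sP z) (kX z)) !mulr0.
rewrite T1 T2 T3 !T4 T5 in HX.
have nX0 : nrmS2 coord vert X = 0.
  have h1 := nrmS2_ge0 coord vert X.
  have h2 := ipgrad_ge0 coord vert X.
  have hi : 0 < dt^-1 by rewrite invr_gt0.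
  set n := nrmS2 coord vert X in HX h1 *.
  set g := ipgrad coord vert X X in HX h2.
  set p := dt^-1 in HX hi.
  have e : p * n + sigma * (p * p * n) + L1 * 2^-1 * g = 0.
    rewrite HX; ring.
  have : p * n = 0.
    have a1 : 0 <= p * n by rewrite mulr_ge0 // ltW.
    have a2 : 0 <= sigma * (p * p * n) by rewrite !mulr_ge0 // ltW.
    have a3 : 0 <= L1 * 2^-1 * g by rewrite !mulr_ge0 // ?ltW // invr_gt0 ltr0n.
    lra.
  by move/eqP; rewrite mulf_eq0 gt_eqF //= => /eqP.
have sQ1 : forall z, symtf (Q1 z).
  move=> z; case: (boolP (bnode vert z)) => bz.
    by rewrite hQ1 //; split; [rewrite trmx0 | rewrite mxtrace0].
  have := psumr_eq0P (fun z _ => mulr_ge0 (gam_ge0 coord vert z) (frob_ge0 (X z))) nX0.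
  move=> /(_ z bz) /eqP; rewrite mulf_eq0 gt_eqF ?gam_gt0 //= => /eqP /frob_eq0.
  move=> X0; rewrite XE X0 addr0; exact: symtf_Sp.
have sD : forall z, symtf (Q1 z - Q0 z).
  move=> z; have [h1 t1] := sQ1 z; have [h0 t0] := sQ0 z.
  by split; [rewrite trD trN h1 h0 | rewrite mxtraceD trcN t1 t0 subrr].
have DS : in_Sh vert (fun z => Q1 z - Q0 z) by move=> z bz; rewrite hQ1 ?hQ0 // subrr.
have HD := H1 _ DS.
have A1 : ipS coord vert (fun z => dt^-1 *: (Q1 z - Q0 z)) (fun z => Q1 z - Q0 z)
    = dt * nrmS2 coord vert (fun z => dt^-1 *: (Q1 z - Q0 z)).
  apply: sum_lin1 => z _ /=; rewrite !frobZl !frobZr; field; rewrite ?dt0 //.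
have A2 : ipS coord vert (fun z => dt^-1 *: (dt^-1 *: (Q1 z - Q0 z) - dt^-1 *: (Q0 z - Qm z)))
      (fun z => Q1 z - Q0 z)
    = 2^-1 * nrmS2 coord vert (fun z => dt^-1 *: (Q1 z - Q0 z))
      + (- 2^-1) * nrmS2 coord vert (fun z => dt^-1 *: (Q0 z - Qm z))
      + 2^-1 * nrmS2 coord vert (fun z => dt^-1 *: (Q1 z - Q0 z) - dt^-1 *: (Q0 z - Qm z)).
  apply: sum_lin3 => z _ /=.
  rewrite !(frobZl, frobZr, frobBl, frobBr).
  rewrite ?(frobC (Q0 z) (Q1 z)) ?(frobC (Qm z) (Q1 z)) ?(frobC (Qm z) (Q0 z)).
  field; rewrite ?dt0 ?andbT //.
have A3 : ipgrad coord vert (fun z => 2^-1 *: (Q1 z + Q0 z)) (fun z => Q1 z - Q0 z)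
    = 2^-1 * ipgrad coord vert Q1 Q1 + (- 2^-1) * ipgrad coord vert Q0 Q0.
  apply: sum_lin2 => T _ /=.
  rewrite (@sum_lin2 _ _ _ _ (fun a => frob (dW coord vert Q1 T a) (dW coord vert Q1 T a))
     (fun a => frob (dW coord vert Q0 T a) (dW coord vert Q0 T a)) 2^-1 (- 2^-1)); first ring.
  move=> k _.
  rewrite (@dW_lin2 _ _ _ _ coord vert (fun z => 2^-1 *: (Q1 z + Q0 z)) Q1 Q0 2^-1 2^-1); last by move=> z; rewrite scalerDr.
  rewrite (@dW_lin2 _ _ _ _ coord vert (fun z => Q1 z - Q0 z) Q1 Q0 1 (-1)); last by move=> z; rewrite scale1r scaleN1r.
  rewrite !(frobZl, frobZr, frobDl, frobDr).
  rewrite ?(frobC (dW coord vert Q0 T k) (dW coord vert Q1 T k)).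
  ring.
have vD : forall T j, vdiv coord vert (fun z => Q1 z - Q0 z) T j
    = vdiv coord vert Q1 T j - vdiv coord vert Q0 T j.
  move=> T j; rewrite /vdiv -sumrB; apply: eq_bigr => k _.
  rewrite (@dW_lin2 _ _ _ _ coord vert (fun z => Q1 z - Q0 z) Q1 Q0 1 (-1)); last by move=> z; rewrite scale1r scaleN1r.
  rewrite !mxE; ring.
have A4 : alpha_ip coord vert Q1 (fun z => Q1 z - Q0 z) + alpha_ip coord vert Q0 (fun z => Q1 z - Q0 z)
    = -2 * divnorm2 coord vert Q1 + 2 * divnorm2 coord vert Q0.
  rewrite !alpha_sym // -big_split /=; apply: sum_lin2 => T _.
  have e1 : \sum_(j < d) vdiv coord vert Q1 T j * vdiv coord vert (fun z => Q1 z - Q0 z) T j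
     = 1 * \sum_(j < d) vdiv coord vert Q1 T j ^+ 2
       + (-1) * \sum_(j < d) vdiv coord vert Q1 T j * vdiv coord vert Q0 T j.
    by apply: sum_lin2 => j _; rewrite vD; ring.
  have e0 : \sum_(j < d) vdiv coord vert Q0 T j * vdiv coord vert (fun z => Q1 z - Q0 z) T j
     = 1 * \sum_(j < d) vdiv coord vert Q1 T j * vdiv coord vert Q0 T j
       + (-1) * \sum_(j < d) vdiv coord vert Q0 T j ^+ 2.
    by apply: sum_lin2 => j _; rewrite vD; ring.
  rewrite e1 e0 /vdiv; ring.
have A5 : ipS coord vert (fun z => ((r1 z + r0 z) / 2) *: PQ a b c A0 (Q0 z)) (fun z => Q1 z - Q0 z)
    = ipT coord vert (fun z => frob (PQ a b c A0 (Q0 z)) (Q1 z - Q0 z)) (fun z => (r1 z + r0 z) / 2).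
  by apply: eq_bigr => z _; rewrite frobZl; ring.
have psiT : in_Th vert (fun z => (r1 z + r0 z) / 2).
  by move=> z bz /=; rewrite hr1 ?hr0 // addr0 mul0r.
have A6 : ipT coord vert (fun z => r1 z - r0 z) (fun z => (r1 z + r0 z) / 2)
    = 2^-1 * nrmT2 coord vert r1 + (- 2^-1) * nrmT2 coord vert r0.
  by apply: sum_lin2 => z _; ring.
rewrite A1 A2 A3 A4 A5 -(H2 _ psiT) A6 in HD.
lra.
Qed.
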